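(* Let $(X,\mathcal{M},O)$ be an empirical scenario, let $e=\{e_C\}_{C\in\mathcal{M}}$ be an empirical model on it, and let $e^\dagger$ be any WPS representation of $e$, with underlying weak probability space $(Y,\Sigma,\mu)$. Then: (1) if $e$ is strongly contextual, then $e^\dagger$ maximally violates subadditivity, i.e. there is a finite $V\subseteq\Sigma$ with $\bigcup V\in\Sigma$ and $\mathfrak{a}(V)=1$; (2) if $e$ is logically contextual, then $e^\dagger$ violates subadditivity, i.e. there is a finite $V\subseteq\Sigma$ with $\bigcup V\in\Sigma$ and $\mathfrak{a}(V)>0$; (3) if $e$ is probabilistically contextual, then every monotonic extension $(Y,\Sigma',\mu')$ of $(Y,\Sigma,\mu)$ violates additivity, i.e. there is a finite collection $V\subseteq\Sigma'$ of pairwise disjoint sets with $\bigcup V\in\Sigma'$ and $\mu'(\bigcup V)\neq\sum_{A\in V}\mu'(A)$.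
   Context: An empirical scenario is a triple $(X,\mathcal{M},O)$ where $X$ is a finite set (measurements), $\mathcal{M}$ is a family of subsets of $X$ (maximal contexts) covering $X$, none contained in another, and $O$ is a finite nonempty set (outcomes). A context is a subset of some maximal context; $\mathcal{M}'$ denotes the set of all contexts. For $U\subseteq X$ let $\mathcal{E}(U):=O^U$ (functions $U\to O$, called sections over $U$); for $U\subseteq U'$ and $s\in\mathcal{E}(U')$, $s|_U$ is the restriction; elements of $\mathcal{E}(X)$ are global sections. For $C\in\mathcal{M}$, a probability distribution $e_C$ on the finite set $\mathcal{E}(C)$, and $U\subseteq C$, the marginal $e_C|_U$ is the distribution on $\mathcal{E}(U)$ given by $e_C|_U(s)=\sum_{r\in\mathcal{E}(C),\,r|_U=s}e_C(r)$. An empirical model is a family $e=\{e_C\}_{C\in\mathcal{M}}$ of probability distributions $e_C$ on $\mathcal{E}(C)$ with $e_C|_{C\cap C'}=e_{C'}|_{C\cap C'}$ for all $C,C'\in\mathcal{M}$. A global section $s$ is consistent with the support of $e$ if $e_C(s|_C)>0$ for all $C\in\mathcal{M}$. $e$ is strongly contextual if no global section is consistent with the support of $e$; logically contextual if there exist $C\in\mathcal{M}$ and $t\in\mathcal{E}(C)$ with $e_C(t)>0$ such that no global section $s$ with $s|_C=t$ is consistent with the support of $e$; probabilistically contextual if there is no probability distribution $e_X$ on $\mathcal{E}(X)$ with $e_X|_C=e_C$ for all $C\in\mathcal{M}$. An event representation of $e$ is a set $Y$ together with an injective map $\bar E:\bigcup_{U\subseteq X}\mathcal{E}(U)\to P(Y)$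 such that for every nonempty $U\subseteq X$ and $s\in\mathcal{E}(U)$, $\bar E(s)=\bigcap_{x\in U}\bar E(s|_{\{x\}})\neq\emptyset$. For a nonempty context $U$, let $\Sigma_U$ be the Boolean algebra of subsets of $Y$ generated by $\{\bar E(s):s\in\mathcal{E}(\{x\}),x\in U\}$, and let $\Sigma=\bigcup_{U\in\mathcal{M}'}\Sigma_U$ (a collection of subsets of $Y$, not necessarily an algebra). A WPS representation of $e$ is such an event representation together with a function $\mu:\Sigma\to\mathbb{R}$ satisfying: (WC) for every context $U$, $\mu|_{\Sigma_U}$ is a (finitely additive) probability measure on $(Y,\Sigma_U)$; (EC) for every $C\in\mathcal{M}$, $U\subseteq C$, and $s\in\mathcal{E}(U)$, $\mu(\bar E(s))=e_C|_U(s)$; (ME) for every context $U$ and distinct $s,s'\in\mathcal{E}(U)$, $\mu(\bar E(s)\cap\bar E(s'))=0$. The triple $(Y,\Sigma,\mu)$ is its weak probability space. For a finite $V\subseteq\Sigma$ with $\bigcup V\in\Sigma$, the defect of subadditivity is $\mathfrak{a}(V):=\mu(\bigcup V)-\sum_{A\in V}\mu(A)$. An extension of $(Y,\Sigma,\mu)$ is a triple $(Y,\Sigma',\mu')$ where $\Sigma'\subseteq P(Y)$ contains the algebra generated by $\Sigma$ and $\mu':\Sigma'\to\mathbb{R}$ satisfies $\mu'|_\Sigma=\mu$; it is monotonic if $\mu'$ takes values in $[0,1]$ and $A\subseteq B$ implies $\mu'(A)\le\mu'(B)$. *)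

(* Defs.v *)
From HB Require Import structures.
From mathcomp Require Import all_boot all_order all_algebra.
From mathcomp Require Import boolp classical_sets reals.
Set Implicit Arguments.
Unset Strict Implicit.
Unset Printing Implicit Defensive.
Import Order.TTheory GRing.Theory Num.Theory.
Local Open Scope classical_set_scope.
Local Open Scope ring_scope.

Definition empirical_scenario (X O : finType) (M : {set {set X}}) : Prop :=
  [/\ (forall x : X, exists2 C, C \in M & x \in C),
      (forall C C', C \in M -> C' \in M -> C \subset C' -> C = C')
    & (0 < #|O|)%N ].

Definition context (X : finType) (M : {set {set X}}) (U : {set X}) : Prop :=
  exists2 C, C \in M & U \subset C.

(** * Sections
   A section over U is encoded as a finite function s : X -> option O whose
   domain {x | s x <> None} is exactly U.  Thus the disjoint union of all
   E(U), U ⊆ X, is exactly the type {ffun X -> option O}. *)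
Notation section X O := {ffun X -> option O}.

Definition dom (X O : finType) (s : section X O) : {set X} :=
  [set x | s x != None].

Definition sec_over (X O : finType) (U : {set X}) (s : section X O) : bool :=
  dom s == U.

(** restriction s|_U (meaningful when U ⊆ dom s) *)
Definition restrict (X O : finType) (U : {set X}) (s : section X O)
  : section X O := [ffun x => if x \in U then s x else None].

Definition global_section (X O : finType) (s : section X O) : bool :=
  sec_over [set: X] s.

(** * Empirical models
   e C is the distribution e_C on E(C) (only its values on sections over C
   are relevant). *)
Definition marginal (R : numDomainType) (X O : finType)
  (eC : section X O -> R) (C U : {set X}) (t : section X O) : R :=
  \sum_(r : section X O | sec_over C r && (restrict U r == t)) eC r.

Definition is_distribution_on (R : numDomainType) (X O : finType)
  (C : {set X}) (p : section X O -> R) : Prop :=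
  (forall r, sec_over C r -> 0 <= p r) /\
  \sum_(r : section X O | sec_over C r) p r = 1.

Definition empirical_model (R : numDomainType) (X O : finType)
  (M : {set {set X}}) (e : {set X} -> section X O -> R) : Prop :=
  (forall C, C \in M -> is_distribution_on C (e C)) /\
  (forall C C', C \in M -> C' \in M ->
     forall t, sec_over (C :&: C') t ->
       marginal (e C) C (C :&: C') t = marginal (e C') C' (C :&: C') t).

Definition consistent_with_support (R : numDomainType) (X O : finType)
  (M : {set {set X}}) (e : {set X} -> section X O -> R) (s : section X O)
  : Prop :=
  forall C, C \in M -> 0 < e C (restrict C s).

Definition strongly_contextual (R : numDomainType) (X O : finType)
  (M : {set {set X}}) (e : {set X} -> section X O -> R) : Prop :=
  ~ exists s, global_section s /\ consistent_with_support M e s.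

Definition logically_contextual (R : numDomainType) (X O : finType)
  (M : {set {set X}}) (e : {set X} -> section X O -> R) : Prop :=
  exists C, exists t, [/\ C \in M, sec_over C t, 0 < e C t &
    ~ exists s, [/\ global_section s, restrict C s = t &
                    consistent_with_support M e s]].

Definition probabilistically_contextual (R : numDomainType) (X O : finType)
  (M : {set {set X}}) (e : {set X} -> section X O -> R) : Prop :=
  ~ exists eX : section X O -> R,
      is_distribution_on [set: X] eX /\
      forall C, C \in M -> forall t, sec_over C t ->
        marginal eX [set: X] C t = e C t.

Inductive gen_algebra (Y : Type) (G : set (set Y)) : set (set Y) :=
  | ga_base A : G A -> gen_algebra G A
  | ga_empty : gen_algebra G set0
  | ga_compl A : gen_algebra G A -> gen_algebra G (~` A)
  | ga_union A B : gen_algebra G A -> gen_algebra G B ->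
                   gen_algebra G (A `|` B).

Definition event_representation (X O : finType) (Y : Type)
  (Ebar : section X O -> set Y) : Prop :=
  (forall s s', Ebar s = Ebar s' -> s = s') /\
  (forall (U : {set X}) (s : section X O), U != finset.set0 -> sec_over U s ->
     Ebar s = [set y | forall x, x \in U -> Ebar (restrict [set x] s) y]
     /\ Ebar s <> set0).

Definition SigmaU (X O : finType) (Y : Type) (Ebar : section X O -> set Y)
  (U : {set X}) : set (set Y) :=
  gen_algebra [set A | exists x, exists s,
                 [/\ x \in U, sec_over [set x] s & A = Ebar s]].

Definition Sigma (X O : finType) (M : {set {set X}}) (Y : Type)
  (Ebar : section X O -> set Y) : set (set Y) :=
  [set A | exists U, [/\ context M U, U != finset.set0 & SigmaU Ebar U A]].

Definition fa_probability (R : numDomainType) (Y : Type)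
  (F : set (set Y)) (mu : set Y -> R) : Prop :=
  [/\ (forall A, F A -> 0 <= mu A),
      mu setT = 1
    & (forall A B, F A -> F B -> A `&` B = set0 -> mu (A `|` B) = mu A + mu B)].

(** WPS representation (μ is given as a total function on subsets of Y;
    only its values on Σ are constrained). *)
Definition WPS_representation (R : numDomainType) (X O : finType)
  (M : {set {set X}}) (e : {set X} -> section X O -> R) (Y : Type)
  (Ebar : section X O -> set Y) (mu : set Y -> R) : Prop :=
  [/\ event_representation Ebar,
      (forall U, context M U -> U != finset.set0 -> fa_probability (SigmaU Ebar U) mu),
      (* (EC) *)
      (forall (C U : {set X}) s, C \in M -> U \subset C -> sec_over U s ->
         Sigma M Ebar (Ebar s) -> mu (Ebar s) = marginal (e C) C U s)
    & (* (ME) *)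
      (forall U s s', context M U -> sec_over U s -> sec_over U s' -> s != s' ->
         mu (Ebar s `&` Ebar s') = 0)].

(** A finite family V of subsets of Y, given as an injective enumeration
    V : 'I_n -> set Y. *)
Definition fin_family (Y : Type) (n : nat) (V : 'I_n -> set Y) : Prop :=
  forall i j, V i = V j -> i = j.

Definition family_union (Y : Type) (n : nat) (V : 'I_n -> set Y) : set Y :=
  [set y | exists i, V i y].

Definition defect (R : numDomainType) (Y : Type) (mu : set Y -> R)
  (n : nat) (V : 'I_n -> set Y) : R :=
  mu (family_union V) - \sum_(i < n) mu (V i).

Definition monotonic_extension (R : numDomainType) (Y : Type)
  (Sig : set (set Y)) (mu : set Y -> R)
  (Sig' : set (set Y)) (mu' : set Y -> R) : Prop :=
  [/\ (forall A, gen_algebra Sig A -> Sig' A),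
      (forall A, Sig A -> mu' A = mu A),
      (forall A, Sig' A -> 0 <= mu' A <= 1)
    & (forall A B, Sig' A -> Sig' B -> A `<=` B -> mu' A <= mu' B)].

(* Main.v *)
Require Import Defs.
From HB Require Import structures.
From mathcomp Require Import all_boot all_order all_algebra.
From mathcomp Require Import boolp classical_sets reals.
Import Order.TTheory GRing.Theory Num.Theory.
Local Open Scope classical_set_scope.
Local Open Scope ring_scope.


Set Implicit Arguments.
Unset Strict Implicit.

Definition myU (Y : Type) (I : eqType) (r : seq I) (f : I -> set Y) : set Y :=
  [set y | exists2 i, i \in r & f i y].
Definition myI (Y : Type) (I : eqType) (r : seq I) (f : I -> set Y) : set Y :=
  [set y | forall i, i \in r -> f i y].

Lemma myU_cons (Y : Type) (I : eqType) (i : I) r (f : I -> set Y) :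
  myU (i :: r) f = f i `|` myU r f.
Proof.
apply/seteqP; split => y /=.
  by case=> j; rewrite inE => /orP[/eqP->|jr] fj; [left|right; exists j].
by case=> [fi|[j jr fj]]; [exists i; rewrite ?inE ?eqxx|exists j; rewrite ?inE ?jr ?orbT].
Qed.

Lemma myU_nil (Y : Type) (I : eqType) (f : I -> set Y) : myU [::] f = set0.
Proof. by apply/seteqP; split => y //= [i]. Qed.

Lemma myI_cons (Y : Type) (I : eqType) (i : I) r (f : I -> set Y) :
  myI (i :: r) f = f i `&` myI r f.
Proof.
apply/seteqP; split => y /=.
  move=> h; split; first by apply: h; rewrite inE eqxx.
  by move=> j jr; apply: h; rewrite inE jr orbT.
by case=> fi h j; rewrite inE => /orP[/eqP->//|]; apply: h.
Qed.

Lemma myI_nil (Y : Type) (I : eqType) (f : I -> set Y) : myI [::] f = setT.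
Proof. by apply/seteqP; split => y //=. Qed.

Section Alg0.
Variables (Y : Type) (F : set (set Y)).
Hypotheses (F0 : F set0) (FC : forall A, F A -> F (~` A))
  (FU : forall A B, F A -> F B -> F (A `|` B)).

Lemma FT : F setT.
Proof using F0 FC FU. by rewrite -setC0; apply: FC. Qed.

Lemma FI A B : F A -> F B -> F (A `&` B).
Proof using F0 FC FU. by move=> fa fb; rewrite -[A `&` B]setCK setCI; apply/FC/FU; apply: FC. Qed.

Lemma FD A B : F A -> F B -> F (A `\` B).
Proof using F0 FC FU. by move=> fa fb; rewrite setDE; apply: FI => //; apply: FC. Qed.



Lemma F_myU {I : eqType} {r : seq I} {f : I -> set Y} : (forall i, i \in r -> F (f i)) -> F (myU r f).
Proof using F0 FC FU.
elim: r => [|i r IH] h; first by rewrite myU_nil.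
rewrite myU_cons; apply: FU; first by apply: h; rewrite inE eqxx.
by apply: IH => j jr; apply: h; rewrite inE jr orbT.
Qed.

Lemma F_myI {I : eqType} {r : seq I} {f : I -> set Y} : (forall i, i \in r -> F (f i)) -> F (myI r f).
Proof using F0 FC FU.
elim: r => [|i r IH] h; first by rewrite myI_nil; exact: FT.
rewrite myI_cons; apply: FI; first by apply: h; rewrite inE eqxx.
by apply: IH => j jr; apply: h; rewrite inE jr orbT.
Qed.

End Alg0.

Section Alg.
Variables (R : realType) (Y : Type) (F : set (set Y)) (m : set Y -> R).
Hypotheses (F0 : F set0) (FC : forall A, F A -> F (~` A))
  (FU : forall A B, F A -> F B -> F (A `|` B))
  (m0 : forall A, F A -> 0 <= m A)
  (madd : forall A B, F A -> F B -> A `&` B = set0 -> m (A `|` B) = m A + m B).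
Variable (I : eqType).

Lemma m_split A B : F A -> F B -> m A = m (A `&` B) + m (A `\` B).
Proof using F0 FC FU m0 madd.
move=> fa fb; rewrite -madd.
- by rewrite setDE -setIUr setUCr setIT.
- exact: (FI F0 FC FU).
- exact: (FD F0 FC FU).
by rewrite setDE setIACA setICr setI0.
Qed.

Lemma m_le A B : F A -> F B -> A `<=` B -> m A <= m B.
Proof using F0 FC FU m0 madd.
move=> fa fb AB; rewrite (m_split fb fa).
have -> : B `&` A = A by rewrite setIC; apply/setIidPl.
by rewrite lerDl; apply: m0; apply: (FD F0 FC FU).
Qed.

Lemma m_union_le A B : F A -> F B -> m (A `|` B) <= m A + m B.
Proof using F0 FC FU m0 madd.
move=> fa fb; have -> : A `|` B = A `|` (B `\` A).
  by rewrite setDE setUIr setUCr setIT.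
rewrite madd //; last 2 first.
- exact: (FD F0 FC FU).
- by rewrite setDE setICA setICr setI0.
rewrite lerD2l; apply: m_le => //; first exact: (FD F0 FC FU).
Qed.

Lemma m_set0 : m set0 = 0.
Proof using F0 FC FU m0 madd.
have := madd F0 F0 (setI0 _); rewrite setU0 => h.
by apply: (addrI (m set0)); rewrite addr0 -h.
Qed.

Lemma m_compl A : F A -> m (~` A) = m setT - m A.
Proof using F0 FC FU m0 madd.
move=> fa; rewrite -(setUCr A) madd ?setICr //; last by apply: FC.
by rewrite addrC addKr.
Qed.

Lemma m_myU_le (r : seq I) f : (forall i, i \in r -> F (f i)) ->
  m (myU r f) <= \sum_(i <- r) m (f i).
Proof using F0 FC FU m0 madd.
elim: r => [|i r IH] h; first by rewrite myU_nil m_set0 big_nil.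
have hr : forall j, j \in r -> F (f j) by move=> j jr; apply: h; rewrite inE jr orbT.
have hi : F (f i) by apply: h; rewrite inE eqxx.
rewrite myU_cons big_cons; have := m_union_le hi ((F_myU F0 FC FU) hr) => h1; apply: le_trans h1 _.
by rewrite lerD2l; apply: IH.
Qed.

Lemma m_myU_null (r : seq I) f : uniq r -> (forall i, i \in r -> F (f i)) ->
  (forall i j, i \in r -> j \in r -> i != j -> m (f i `&` f j) = 0) ->
  m (myU r f) = \sum_(i <- r) m (f i).
Proof using F0 FC FU m0 madd.
elim: r => [|i r IH] /= ur h hn; first by rewrite myU_nil m_set0 big_nil.
case/andP: ur => ir ur.
have hr : forall j, j \in r -> F (f j) by move=> j jr; apply: h; rewrite inE jr orbT.
have hi : F (f i) by apply: h; rewrite inE eqxx.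
have FUr := (F_myU F0 FC FU) hr.
rewrite myU_cons big_cons -(IH ur hr); last first.
  by move=> a b ar br; apply: hn; rewrite inE ?ar ?br orbT.
have -> : f i `|` myU r f = f i `|` (myU r f `\` f i).
  by rewrite setDE setUIr setUCr setIT.
rewrite madd //; last 2 first.
- exact: (FD F0 FC FU).
- by rewrite setDE setICA setICr setI0.
rewrite [m (myU r f)](m_split FUr hi); congr (_ + _).
suff -> : m (myU r f `&` f i) = 0 by rewrite add0r.
have -> : myU r f `&` f i = myU r (fun j => f j `&` f i).
  apply/seteqP; split => y /=; first by case=> -[j jr fj fi]; exists j.
  by case=> j jr [fj fi]; split=> //; exists j.
have FX : F (myU r (fun j => f j `&` f i)).
  by apply: (F_myU F0 FC FU) => j jr; apply: (FI F0 FC FU) => //; apply: hr.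
apply: le_anti; apply/andP; split; last exact: m0 FX.
apply: le_trans (m_myU_le _) _; first by move=> j jr; apply: (FI F0 FC FU) => //; apply: hr.
rewrite big_seq big1 // => j jr; apply: hn; rewrite ?inE ?jr ?eqxx ?orbT //.
by apply: contraNneq ir => <-.
Qed.

End Alg.

Lemma undup_sum_le (R : realType) (T : eqType) (m : T -> R) (L : seq T) :
  (forall A, A \in L -> 0 <= m A) ->
  \sum_(A <- undup L) m A <= \sum_(A <- L) m A.
Proof.
elim: L => [|a L IH] h /=; first by rewrite big_nil.
have hL : forall A, A \in L -> 0 <= m A by move=> A AL; apply: h; rewrite inE AL orbT.
rewrite big_cons; case: ifP => aL.
  by apply: le_trans (IH hL) _; rewrite lerDr; apply: h; rewrite inE eqxx.
by rewrite big_cons lerD2l; apply: IH.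
Qed.

Lemma dedup (R : realType) (Y : Type) (P : set Y -> Prop) (m : set Y -> R)
  (L : seq (set Y)) :
  (forall A, A \in L -> P A) -> (forall A, A \in L -> 0 <= m A) ->
  exists n (V : 'I_n -> set Y),
    [/\ fin_family V, (forall i, P (V i)),
        family_union V = [set y | exists2 A, A \in L & A y],
        0 <= \sum_(i < n) m (V i) & \sum_(i < n) m (V i) <= \sum_(A <- L) m A].
Proof.
move=> hP hm; set u := undup L.
have inu : forall i : 'I_(size u), nth set0 u i \in L.
  by move=> i; rewrite -mem_undup; apply: mem_nth.
exists (size u), (fun i => nth set0 u i); split.
- move=> i j /eqP; rewrite nth_uniq ?undup_uniq // => /eqP ij; exact: val_inj.
- by move=> i; apply: hP.
- apply/seteqP; split => y /=.
    by case=> i hi; exists (nth set0 u i).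
  case=> A AL Ay.
  have Au : A \in u by rewrite mem_undup.
  have iu : (index A u < size u)%N by rewrite index_mem.
  by exists (Ordinal iu) => /=; rewrite nth_index.
- by apply: sumr_ge0 => i _; apply: hm.
have -> : \sum_(i < size u) m (nth set0 u i) = \sum_(A <- u) m A.
  by rewrite (big_nth set0) big_mkord.
exact: undup_sum_le.
Qed.

Set Implicit Arguments.
Unset Strict Implicit.

Section Sec.
Variables (X O : finType).
Implicit Types (s t g : section X O) (U C : {set X}).

Lemma domE s x : (x \in dom s) = (s x != None).
Proof. by rewrite /dom inE. Qed.

Lemma restrict_id C s : sec_over C s -> restrict C s = s.
Proof.
move/eqP=> <-; apply/ffunP=> x; rewrite ffunE domE.
by case: (s x).
Qed.

Lemma dom_restrict U s : dom (restrict U s) = U :&: dom s.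
Proof. by apply/setP=> x; rewrite !inE ffunE; case: (x \in U). Qed.

Lemma restrictK U C s : U \subset C -> restrict U (restrict C s) = restrict U s.
Proof.
move/fintype.subsetP=> h; apply/ffunP=> x; rewrite !ffunE.
by case xU: (x \in U) => //; rewrite h.
Qed.

Lemma sec_restrict1 x s : x \in dom s -> sec_over [set x] (restrict [set x] s).
Proof.
move=> xs; rewrite /sec_over dom_restrict; apply/eqP/setP=> z.
by rewrite !inE; case: (z =P x) => // ->; rewrite -domE.
Qed.

Lemma sec_restrict U s : U \subset dom s -> sec_over U (restrict U s).
Proof. by move=> h; rewrite /sec_over dom_restrict; apply/eqP/finset.setIidPl. Qed.

Lemma sec1_None x s z : sec_over [set x] s -> z != x -> s z = None.
Proof.
move/eqP/setP/(_ z); rewrite domE inE => h zx.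
by move: h; rewrite (negbTE zx); case: (s z).
Qed.

Lemma sec0 s : sec_over finset.set0 s -> s = [ffun => None].
Proof.
move/eqP/setP=> h; apply/ffunP=> x; move: (h x); rewrite domE inE ffunE.
by case: (s x).
Qed.

Lemma sec0_empty : sec_over finset.set0 ([ffun => None] : section X O).
Proof. by rewrite /sec_over; apply/eqP/setP=> x; rewrite domE inE ffunE. Qed.

Lemma restrict0 s : restrict finset.set0 s = [ffun => None].
Proof. by apply/ffunP=> x; rewrite !ffunE inE. Qed.

Lemma marginal_self (R : numDomainType) (eC : section X O -> R) C s :
  sec_over C s -> marginal eC C C s = eC s.
Proof.
move=> hs; rewrite /marginal (big_pred1 s) // => r /=.
apply/andP/eqP => [[hr /eqP]|->]; first by rewrite restrict_id.
by rewrite hs restrict_id.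
Qed.

Lemma dist_empty (R : numDomainType) (p : section X O -> R) :
  is_distribution_on finset.set0 p -> p [ffun => None] = 1.
Proof.
case=> _ <-; rewrite (big_pred1 [ffun => None]) // => r /=.
apply/idP/eqP => [/sec0 //|->]; exact: sec0_empty.
Qed.

End Sec.

Set Implicit Arguments.
Unset Strict Implicit.

Section Main.
Variables (X O : finType) (M : {set {set X}}) (R : realType)
  (e : {set X} -> {ffun X -> option O} -> R)
  (Y : Type) (Ebar : {ffun X -> option O} -> set Y) (mu : set Y -> R).
Hypotheses (HS : empirical_scenario O M) (HE : empirical_model M e)
  (HW : WPS_representation M e Ebar mu).
Implicit Types (s t g : section X O) (U C : {set X}).

Lemma ER : event_representation Ebar. Proof. by case: HW. Qed.
Lemma WC U : context M U -> U != finset.set0 -> fa_probability (SigmaU Ebar U) mu.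
Proof. by case: HW => _ h _ _; apply: h. Qed.

Lemma ctxM C : C \in M -> context M C.
Proof. by move=> CM; exists C. Qed.

Lemma ctx1 x : context M [set x].
Proof. case: HS => [cov _ _]; case: (cov x) => C CM xC; exists C => //.
by rewrite finset.sub1set. Qed.

Lemma set1_ne0 (x : X) : [set x]%SET != finset.set0.
Proof. by apply/set0Pn; exists x; rewrite inE. Qed.

Lemma Ebar_myI U s : U != finset.set0 -> sec_over U s ->
  Ebar s = myI (enum U) (fun x => Ebar (restrict [set x] s)).
Proof.
move=> U0 hs; case: ER => _ /(_ U s U0 hs) [-> _].
apply/seteqP; split => y /= h x.
  by rewrite mem_enum; apply: h.
by move=> xU; apply: h; rewrite mem_enum.
Qed.

Lemma SigU_Ebar U s : U != finset.set0 -> sec_over U s -> SigmaU Ebar U (Ebar s).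
Proof.
move=> U0 hs; rewrite (Ebar_myI U0 hs); apply: (F_myI (@ga_empty _ _) (@ga_compl _ _) (@ga_union _ _)).
move=> x; rewrite mem_enum => xU; apply: ga_base; exists x, (restrict [set x] s).
split=> //; apply: sec_restrict1; by rewrite (eqP hs).
Qed.

Lemma SigU_Sig U A : context M U -> U != finset.set0 -> SigmaU Ebar U A -> Sigma M Ebar A.
Proof. by move=> c U0 h; exists U. Qed.

Lemma mu_Ebar C s : C \in M -> C != finset.set0 -> sec_over C s -> mu (Ebar s) = e C s.
Proof.
move=> CM C0 hs; case: HW => _ _ EC _.
rewrite (EC C C s CM (subxx _) hs); first exact: marginal_self.
exact: (SigU_Sig (ctxM CM) C0 (SigU_Ebar C0 hs)).
Qed.

Lemma SU0 U : SigmaU Ebar U set0. Proof. exact: ga_empty. Qed.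
Lemma SUC U A : SigmaU Ebar U A -> SigmaU Ebar U (~` A). Proof. exact: ga_compl. Qed.
Lemma SUU U A B : SigmaU Ebar U A -> SigmaU Ebar U B -> SigmaU Ebar U (A `|` B).
Proof. exact: ga_union. Qed.

Definition Ux x := myU [seq s <- index_enum (section X O) | sec_over [set x] s] Ebar.
Definition N x := ~` Ux x.

Lemma Ux_Sig x : SigmaU Ebar [set x] (Ux x).
Proof.
rewrite /SigmaU; apply: (F_myU (@ga_empty _ _) (@ga_compl _ _) (@ga_union _ _)).
by move=> s; rewrite mem_filter => /andP[hs _]; apply: SigU_Ebar => //; apply: set1_ne0.
Qed.

Lemma N_Sig x : SigmaU Ebar [set x] (N x).
Proof. by rewrite /N /SigmaU; apply: ga_compl; apply: Ux_Sig. Qed.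

Lemma mu_N x : mu (N x) = 0.
Proof.
have [m0 mT madd] := WC (ctx1 x) (set1_ne0 x).
have F0 := @SU0 [set x]%SET.
have FC := @SUC [set x]%SET.
have FU := @SUU [set x]%SET.
rewrite /N (m_compl F0 FC FU m0 madd (Ux_Sig x)) mT.
rewrite /Ux (m_myU_null F0 FC FU m0 madd); first last.
- move=> s s'; rewrite !mem_filter => /andP[hs _] /andP[hs' _] ss'.
  case: HW => _ _ _ ME; apply: (ME [set x]%SET) => //; exact: ctx1.
- by move=> s; rewrite mem_filter => /andP[hs _]; apply: SigU_Ebar => //; apply: set1_ne0.
- by apply: filter_uniq; apply: index_enum_uniq.
case: HS => [cov _ _]; case: (cov x) => C CM xC.
rewrite big_filter.
have -> : \sum_(i <- index_enum (section X O) | sec_over [set x] i) mu (Ebar i) =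
          \sum_(i <- index_enum (section X O) | sec_over [set x] i) marginal (e C) C [set x] i.
  apply: eq_bigr => s hs; case: HW => _ _ EC _; apply: EC => //; first by rewrite finset.sub1set.
  by apply: (SigU_Sig (ctx1 x) (set1_ne0 x)); apply: SigU_Ebar => //; apply: set1_ne0.
rewrite /marginal -(partition_big (fun r => restrict [set x] r) (sec_over [set x])).
  by case: HE => /(_ C CM) [_ ->] _; rewrite subrr.
by move=> r hr; apply: sec_restrict1; rewrite (eqP hr).
Qed.


Lemma cover y C0 t : sec_over C0 t ->
  (forall x, x \in C0 -> Ebar (restrict [set x] t) y) -> (forall x, ~ N x y) ->
  exists g, [/\ global_section g, restrict C0 g = t &
                forall x, Ebar (restrict [set x] g) y].
Proof.
move=> ht hy hN.
have h : forall x, exists s, [/\ sec_over [set x] s, Ebar s y &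
                               (x \in C0 -> s = restrict [set x] t)].
  move=> x; case xC: (x \in C0).
    exists (restrict [set x] t); split => //; last exact: hy.
    by apply: sec_restrict1; rewrite (eqP ht).
  case: (pselect (Ux x y)) => [[s]|hn]; last by exfalso; exact: hN x hn.
  by rewrite mem_filter => /andP[hs _] hsy; exists s; split.
have [f hf] := choice h.
have rg : forall x, restrict [set x] [ffun z => f z z] = f x.
  move=> x; apply/ffunP => z; rewrite !ffunE inE.
  case: (z =P x) => [->//|/eqP zx].
  by have [hs _ _] := hf x; rewrite (sec1_None hs zx).
exists [ffun z => f z z]; split.
- rewrite /global_section /sec_over; apply/eqP/setP => z; rewrite domE ffunE inE.
  have [hs _ _] := hf z; move/eqP/setP/(_ z): hs; rewrite domE !inE eqxx.
  by case: (f z z).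
- apply/ffunP => z; rewrite !ffunE; case zC: (z \in C0).
    by have [_ _ /(_ zC) ->] := hf z; rewrite ffunE inE eqxx.
  by move/eqP/setP/(_ z): ht; rewrite domE zC; case: (t z).
by move=> x; rewrite rg; have [] := hf x.
Qed.

Lemma SigT (x : X) : Sigma M Ebar setT.
Proof.
apply: (SigU_Sig (ctx1 x) (set1_ne0 x)).
exact: (FT (@SU0 [set x]%SET) (@SUC _) (@SUU _)).
Qed.

Lemma muT (x : X) : mu setT = 1.
Proof. by have [_ -> _] := WC (ctx1 x) (set1_ne0 x). Qed.

Lemma finish (L : seq (set Y)) (x0 : X) :
  (forall A, A \in L -> Sigma M Ebar A /\ 0 <= mu A) ->
  (forall y, exists2 A, A \in L & A y) ->
  exists n (V : 'I_n -> set Y),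
    [/\ fin_family V, (forall i, Sigma M Ebar (V i)),
        Sigma M Ebar (family_union V),
        1 - \sum_(A <- L) mu A <= defect mu V & defect mu V <= 1].
Proof.
move=> hL hc.
have [n [V [inj PV U s0 sle]]] := @dedup R Y (Sigma M Ebar) mu L
  (fun A h => (hL A h).1) (fun A h => (hL A h).2).
have UT : family_union V = setT.
  by rewrite U; apply/seteqP; split => y //= _; apply: hc.
exists n, V; split => //; first by rewrite UT; exact: SigT x0.
  by rewrite /defect UT (muT x0) lerD2l lerN2.
by rewrite /defect UT (muT x0) gerBl.
Qed.

Lemma e_empty C : C \in M -> C = finset.set0 -> e C [ffun => None] = 1.
Proof.
move=> CM C0; case: HE => /(_ C CM) hd _.
by move: hd; rewrite C0; apply: dist_empty.
Qed.

Lemma sec_restrictG C g : global_section g -> sec_over C (restrict C g).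
Proof. by move=> hg; apply: sec_restrict; rewrite (eqP hg) finset.subsetT. Qed.

Lemma zero_ctx C g : C \in M -> global_section g -> ~ 0 < e C (restrict C g) ->
  C != finset.set0 /\ e C (restrict C g) = 0.
Proof.
move=> CM hg hn; case: (eqVneq C finset.set0) => [C0|C0].
  exfalso; apply: hn; have E := e_empty CM C0; rewrite {}C0 in E *.
  by rewrite restrict0 E ltr01.
split=> //; case: HE => /(_ C CM) [hp _] _.
have := hp _ (sec_restrictG C hg); rewrite le_eqVlt => /orP[/eqP<-//|h].
by exfalso; apply: hn.
Qed.

Lemma in_Ebar_restrict C g y : C != finset.set0 -> global_section g ->
  (forall x, Ebar (restrict [set x] g) y) -> Ebar (restrict C g) y.
Proof.
move=> C0 hg hy; rewrite (Ebar_myI C0 (sec_restrictG C hg)) => x.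
by rewrite mem_enum => xC; rewrite restrictK ?finset.sub1set.
Qed.

Definition Zp (p : ({set X} * section X O)%type) : bool :=
  [&& p.1 \in M, p.1 != finset.set0, sec_over p.1 p.2 & e p.1 p.2 == 0].
Definition Zs := [seq Ebar p.2 | p <- [seq p <- index_enum _ | Zp p]].
Definition Ns := [seq N x | x <- index_enum X].

Lemma NZ_prop A : A \in Ns ++ Zs -> Sigma M Ebar A /\ mu A = 0.
Proof.
rewrite mem_cat => /orP[/mapP[x _ ->]|/mapP[[C s]]].
  by split; [apply: (SigU_Sig (ctx1 x) (set1_ne0 x)); apply: N_Sig|apply: mu_N].
rewrite mem_filter => /andP[/and4P[/= CM C0 hs /eqP e0] _] ->.
split; first exact: (SigU_Sig (ctxM CM) C0 (SigU_Ebar C0 hs)).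
by rewrite (mu_Ebar CM C0 hs).
Qed.

Lemma NZ_sum : \sum_(A <- Ns ++ Zs) mu A = 0.
Proof. by rewrite big_seq big1 // => A /NZ_prop []. Qed.

Lemma NZ_hit y g : global_section g -> (forall x, Ebar (restrict [set x] g) y) ->
  ~ consistent_with_support M e g -> exists2 A, A \in Zs & A y.
Proof.
move=> hg hy hn.
case: (pselect (exists2 C, C \in M & ~ 0 < e C (restrict C g))) => [[C CM hC]|hno].
  have [C0 e0] := zero_ctx CM hg hC.
  exists (Ebar (restrict C g)); last exact: in_Ebar_restrict.
  apply/mapP; exists (C, restrict C g) => //.
  rewrite mem_filter mem_index_enum andbT /Zp /= CM C0 e0 eqxx andbT /=.
  exact: sec_restrictG.
exfalso; apply: hn => C CM.
by case: (pselect (0 < e C (restrict C g))) => // h; exfalso; apply: hno; exists C.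
Qed.

Lemma NZ_cover y C0 t : sec_over C0 t ->
  (forall x, x \in C0 -> Ebar (restrict [set x] t) y) ->
  (forall g, global_section g -> restrict C0 g = t -> ~ consistent_with_support M e g) ->
  exists2 A, A \in Ns ++ Zs & A y.
Proof.
move=> ht hty hg.
case: (pselect (exists x, N x y)) => [[x hx]|hno].
  by exists (N x) => //; rewrite mem_cat; apply/orP; left; apply/mapP; exists x.
have [g [gg rg hy]] := cover ht hty (fun x h => hno (ex_intro _ x h)).
have [A AZ Ay] := NZ_hit gg hy (hg g gg rg).
by exists A => //; rewrite mem_cat AZ orbT.
Qed.

Lemma part1 : strongly_contextual M e ->
  exists n (V : 'I_n -> set Y),
    [/\ fin_family V, (forall i, Sigma M Ebar (V i)),
        Sigma M Ebar (family_union V) & defect mu V = 1].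
Proof.
move=> SC.
have [o _] : exists o : O, o \in O by case: HS => _ _ /card_gt0P.
pose g0 : section X O := [ffun => Some o].
have g0g : global_section g0.
  by rewrite /global_section /sec_over; apply/eqP/setP => z; rewrite domE ffunE inE.
have [C CM hC] : exists2 C, C \in M & ~ 0 < e C (restrict C g0).
  case: (pselect (exists2 C, C \in M & ~ 0 < e C (restrict C g0))) => // hno.
  exfalso; apply: SC; exists g0; split => // C CM.
  by case: (pselect (0 < e C (restrict C g0))) => // h; exfalso; apply: hno; exists C.
have [/set0Pn [x0 _] _] := zero_ctx CM g0g hC.
have := @finish (Ns ++ Zs) x0.
case.
- by move=> A /NZ_prop [h ->].
- move=> y; apply: (@NZ_cover y finset.set0 [ffun => None]).
  + exact: sec0_empty.
  + by move=> x; rewrite inE.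
  + by move=> g gg _ hc; apply: SC; exists g.
move=> n [V [h1 h2 h3 h4 h5]]; exists n, V; split => //.
by apply: le_anti; rewrite h5 /=; move: h4; rewrite NZ_sum subr0.
Qed.

Lemma part2 : logically_contextual M e ->
  exists n (V : 'I_n -> set Y),
    [/\ fin_family V, (forall i, Sigma M Ebar (V i)),
        Sigma M Ebar (family_union V) & 0 < defect mu V].
Proof.
case=> C0 [t [C0M ht et hno]].
case: (eqVneq C0 finset.set0) => [C00|C00].
  have SC : strongly_contextual M e.
    case=> s [gs cs]; apply: hno; exists s; split => //.
    by rewrite C00 restrict0; move: ht; rewrite C00 => /sec0 ->.
  have [n [V [h1 h2 h3 h4]]] := part1 SC.
  by exists n, V; split => //; rewrite h4 ltr01.
have [x0 _] := set0Pn _ C00.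
have [m0 mT madd] := WC (ctxM C0M) C00.
have SEt := SigU_Ebar C00 ht.
have := @finish ((Ns ++ Zs) ++ [:: ~` Ebar t]) x0.
case.
- move=> A; rewrite mem_cat => /orP[/NZ_prop [h ->] //|].
  rewrite inE => /eqP ->; split.
    exact: (SigU_Sig (ctxM C0M) C00 (SUC SEt)).
  exact/m0/SUC.
- move=> y; case: (pselect (Ebar t y)) => Ey; last first.
    by exists (~` Ebar t) => //; rewrite mem_cat mem_seq1 eqxx orbT.
  have [A AL Ay] : exists2 A, A \in Ns ++ Zs & A y.
    apply: (NZ_cover ht).
      by move=> x xC; move: Ey; rewrite (Ebar_myI C00 ht); apply; rewrite mem_enum.
    by move=> g gg rg hc; apply: hno; exists g.
  by exists A => //; rewrite mem_cat AL.
move=> n [V [h1 h2 h3 h4 h5]]; exists n, V; split => //.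
apply: lt_le_trans h4.
rewrite big_cat /= NZ_sum add0r big_seq1.
rewrite (m_compl (@SU0 C0) (@SUC _) (@SUU _) m0 madd SEt) mT (mu_Ebar C0M C00 ht).
by rewrite opprB addrC subrK.
Qed.

Lemma ord2_cases (i : 'I_2) : i = ord0 \/ i = ord_max.
Proof.
case: i => [[|[|k]] hk]; [left|right|by []]; exact: val_inj.
Qed.

Lemma part3_empty : (forall x : X, False) -> ~ probabilistically_contextual M e.
Proof.
move=> hX; apply; exists (fun=> 1).
have allE : forall r : section X O, r = [ffun => None].
  by move=> r; apply/ffunP => x; case: (hX x).
have allS : forall U : {set X}, U = finset.set0.
  by move=> U; apply/setP => x; case: (hX x).
have glob : forall r : section X O, sec_over [set: X]%SET r.
  by move=> r; rewrite (allS [set: X]%SET) (allE r); exact: sec0_empty.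
split.
  split; first by move=> r _; exact: ler01.
  by rewrite (big_pred1 [ffun => None]) // => r /=; rewrite glob (allE r) eqxx.
move=> C CM t ht; rewrite (allE t) (e_empty CM (allS C)) /marginal.
rewrite (big_pred1 [ffun => None]) // => r /=.
by rewrite glob (allE r) (allE (restrict C _)) !eqxx.
Qed.

Section P3.
Variable (nu : set Y -> R) (x0 : X).
Let G := gen_algebra (Sigma M Ebar).
Hypotheses (nu0 : forall A, G A -> 0 <= nu A)
  (nuadd : forall A B, G A -> G B -> A `&` B = set0 -> nu (A `|` B) = nu A + nu B)
  (nuext : forall A, Sigma M Ebar A -> nu A = mu A).

Let G0 : G set0 := ga_empty _.
Let GC A : G A -> G (~` A) := @ga_compl _ _ A.
Let GU A B : G A -> G B -> G (A `|` B) := @ga_union _ _ A B.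

Definition Ag g := myI (index_enum X) (fun x => Ebar (restrict [set x] g)).
Definition Glist := [seq g <- index_enum (section X O) | global_section g].

Lemma Sig_r1 g x : global_section g -> Sigma M Ebar (Ebar (restrict [set x] g)).
Proof.
move=> gg; apply: (SigU_Sig (ctx1 x) (set1_ne0 x)).
exact: (SigU_Ebar (set1_ne0 x) (sec_restrictG _ gg)).
Qed.

Lemma GA g : global_section g -> G (Ag g).
Proof. by move=> gg; apply: (F_myI G0 GC GU) => x _; apply: ga_base; apply: Sig_r1. Qed.

Lemma Ag_sub C g : C != finset.set0 -> global_section g -> Ag g `<=` Ebar (restrict C g).
Proof.
move=> C0 gg y hy; apply: in_Ebar_restrict => // x; apply: hy; exact: mem_index_enum.
Qed.

Lemma uniqG : uniq Glist.
Proof. by apply: filter_uniq; apply: index_enum_uniq. Qed.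

Lemma GN x : G (N x).
Proof. by apply: ga_base; apply: (SigU_Sig (ctx1 x) (set1_ne0 x)); apply: N_Sig. Qed.

Lemma nuCU : nu (~` myU Glist Ag) = 0.
Proof.
have GUU : G (myU Glist Ag).
  by apply: (F_myU G0 GC GU) => g; rewrite mem_filter => /andP[gg _]; apply: GA.
apply: le_anti; apply/andP; split; last exact/nu0/GC.
have GNs : G (myU (index_enum X) N) by apply: (F_myU G0 GC GU) => x _; apply: GN.
apply: le_trans (m_le G0 GC GU nu0 nuadd (GC GUU) GNs _) _.
  move=> y hy; case: (pselect (exists x, N x y)) => [[x hx]|hno].
    by exists x => //; exact: mem_index_enum.
  have [g [gg _ hg]] := @cover y finset.set0 [ffun => None] (sec0_empty _ _)
     (fun x xin => ltac:(by rewrite inE in xin)) (fun x h => hno (ex_intro _ x h)).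
  exfalso; apply: hy; exists g; first by rewrite mem_filter gg mem_index_enum.
  by move=> x _; apply: hg.
apply: le_trans (m_myU_le G0 GC GU nu0 nuadd (fun x _ => GN x)) _.
by rewrite big1 // => x _; rewrite nuext ?mu_N //; apply: (SigU_Sig (ctx1 x) (set1_ne0 x)); apply: N_Sig.
Qed.

Lemma decomp B : G B -> nu B = \sum_(g <- Glist) nu (B `&` Ag g).
Proof.
move=> GB.
have GUU : G (myU Glist Ag).
  by apply: (F_myU G0 GC GU) => g; rewrite mem_filter => /andP[gg _]; apply: GA.
rewrite (m_split G0 GC GU nu0 nuadd GB GUU).
have -> : nu (B `\` myU Glist Ag) = 0.
  have GD := FD G0 GC GU GB GUU.
  apply: le_anti; apply/andP; split; last exact: nu0 GD.
  rewrite -nuCU; apply: (m_le G0 GC GU nu0 nuadd GD (GC GUU)).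
  by move=> y [].
rewrite addr0.
have -> : B `&` myU Glist Ag = myU Glist (fun g => B `&` Ag g).
  apply/seteqP; split => y /=; first by case=> By [g gl Ay]; exists g.
  by case=> g gl [By Ay]; split=> //; exists g.
apply: (m_myU_null G0 GC GU nu0 nuadd uniqG).
  move=> g; rewrite mem_filter => /andP[gg _]; apply: (FI G0 GC GU) => //; exact: GA.
move=> g g'; rewrite !mem_filter => /andP[gg _] /andP[gg' _] gng.
have [x hx] : exists x, g x != g' x.
  case: (pselect (exists x, g x != g' x)) => // hno; exfalso; move: gng.
  suff -> : g = g' by rewrite eqxx.
  apply/ffunP => x; case: (eqVneq (g x) (g' x)) => // h; exfalso; apply: hno; by exists x.
set S := Ebar (restrict [set x] g) `&` Ebar (restrict [set x] g').
have SS : Sigma M Ebar S.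
  apply: (SigU_Sig (ctx1 x) (set1_ne0 x)); apply: (FI (@SU0 _) (@SUC _) (@SUU _)).
    exact: (SigU_Ebar (set1_ne0 x) (sec_restrictG _ gg)).
  exact: (SigU_Ebar (set1_ne0 x) (sec_restrictG _ gg')).
have GAg := GA gg; have GAg' := GA gg'.
apply: le_anti; apply/andP; split; last first.
  by apply: nu0; apply: (FI G0 GC GU); apply: (FI G0 GC GU).
apply: (@le_trans _ _ (nu S)).
  apply: (m_le G0 GC GU nu0 nuadd); first by apply: (FI G0 GC GU); apply: (FI G0 GC GU).
    exact: ga_base.
  move=> y [[_ h1] [_ h2]]; split; [apply: h1|apply: h2]; exact: mem_index_enum.
rewrite nuext //; case: HW => _ _ _ ME.
rewrite (ME [set x]%SET) //; first exact: ctx1.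
- exact: sec_restrictG.
- exact: sec_restrictG.
apply: contra hx => /eqP /ffunP /(_ x); rewrite !ffunE inE eqxx => ->.
by rewrite eqxx.
Qed.

Lemma not_PC : ~ probabilistically_contextual M e.
Proof.
apply; exists (fun g => nu (Ag g)).
have nuT : nu setT = 1 by rewrite nuext ?(muT x0) //; exact: SigT x0.
have sumT : \sum_(r | sec_over [set: X]%SET r) nu (Ag r) = 1.
  rewrite -[RHS]nuT (decomp (FT G0 GC GU)) /Glist big_filter.
  by apply: eq_bigr => g _; rewrite setTI.
split.
  by split => // r hr; apply: nu0; apply: GA.
move=> C CM t ht; rewrite /marginal.
case: (eqVneq C finset.set0) => [C0|C0].
  have tE : t = [ffun => None] by apply: sec0; rewrite -C0.
  rewrite tE (e_empty CM C0) -[RHS]sumT; apply: eq_bigl => r.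
  by rewrite C0 restrict0 eqxx andbT.
have SEt : SigmaU Ebar C (Ebar t) := SigU_Ebar C0 ht.
have SSt : Sigma M Ebar (Ebar t) := SigU_Sig (ctxM CM) C0 SEt.
rewrite -(mu_Ebar CM C0 ht) -nuext // (decomp (ga_base SSt)) /Glist big_filter.
rewrite big_mkcondr /=; apply: eq_bigr => g gg.
have GAg := GA gg.
case: (eqVneq (restrict C g) t) => [<-|hne].
  congr nu; apply/seteqP; split => y; last by case.
  by move=> hy; split=> //; apply: (Ag_sub C0 gg).
have hr := sec_restrictG C gg.
have SS : Sigma M Ebar (Ebar t `&` Ebar (restrict C g)).
  apply: (SigU_Sig (ctxM CM) C0); apply: (FI (@SU0 _) (@SUC _) (@SUU _)) => //.
  exact: SigU_Ebar.
symmetry; apply: le_anti; apply/andP; split; last first.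
  by apply: nu0; apply: (FI G0 GC GU) => //; exact: ga_base.
apply: (@le_trans _ _ (nu (Ebar t `&` Ebar (restrict C g)))).
  apply: (m_le G0 GC GU nu0 nuadd); first by apply: (FI G0 GC GU) => //; exact: ga_base.
    exact: ga_base.
  by move=> y [h1 h2]; split=> //; apply: (Ag_sub C0 gg).
rewrite nuext //; case: HW => _ _ _ ME.
rewrite (ME C) //; first exact: ctxM.
by rewrite eq_sym.
Qed.

End P3.

Lemma part3 : probabilistically_contextual M e ->
  forall (Sig' : set (set Y)) (mu' : set Y -> R),
    monotonic_extension (Sigma M Ebar) mu Sig' mu' ->
    exists n (V : 'I_n -> set Y),
      [/\ fin_family V, (forall i, Sig' (V i)),
          (forall i j, i != j -> V i `&` V j = set0),
          Sig' (family_union V)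
        & mu' (family_union V) != \sum_(i < n) mu' (V i)].
Proof.
move=> PC Sig' mu' [hG hext h01 hmon].
case: (pselect (exists n (V : 'I_n -> set Y),
      [/\ fin_family V, (forall i, Sig' (V i)),
          (forall i j, i != j -> V i `&` V j = set0),
          Sig' (family_union V)
        & mu' (family_union V) != \sum_(i < n) mu' (V i)])) => // H.
exfalso.
have G0 : gen_algebra (Sigma M Ebar) set0 := ga_empty _.
have mu'0 : mu' set0 = 0.
  case: (eqVneq (mu' set0) 0) => // hne; exfalso; apply: H.
  have U0 : family_union (fun _ : 'I_0 => @set0 Y) = set0.
    by apply/seteqP; split => y // [[]].
  exists 0, (fun _ => set0); split.
  - by case.
  - by case.
  - by case.
  - by rewrite U0; apply: hG.
  - by rewrite U0 big_ord0.
have nu0 : forall A, gen_algebra (Sigma M Ebar) A -> 0 <= mu' A.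
  by move=> A GA; have /andP[] := h01 A (hG A GA).
have nuadd : forall A B, gen_algebra (Sigma M Ebar) A -> gen_algebra (Sigma M Ebar) B ->
    A `&` B = set0 -> mu' (A `|` B) = mu' A + mu' B.
  move=> A B GA GB AB.
  case: (eqVneq A B) => [AeB|AnB].
    have A0 : A = set0 by rewrite -AB AeB setIid.
    by rewrite -AeB A0 setU0 mu'0 addr0.
  case: (eqVneq (mu' (A `|` B)) (mu' A + mu' B)) => // hne; exfalso; apply: H.
  pose V : 'I_2 -> set Y := fun i => if i == ord0 then A else B.
  have UV : family_union V = A `|` B.
    apply/seteqP; split => y /=.
      by case=> i; rewrite /V; case: (i == ord0) => h; [left|right].
    by case=> h; [exists ord0|exists ord_max].
  exists 2, V; split.
  - move=> i j; case: (ord2_cases i) => ->; case: (ord2_cases j) => -> //=.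
      by rewrite /V /= => h; exfalso; move/eqP: AnB.
    by rewrite /V /= => h; exfalso; move/eqP: AnB; rewrite h.
  - by move=> i; rewrite /V; case: (i == ord0); apply: hG.
  - move=> i j; case: (ord2_cases i) => ->; case: (ord2_cases j) => -> //=;
      rewrite ?eqxx // /V /= => _; by rewrite // setIC.
  - by rewrite UV; apply: hG; apply: ga_union.
  - by rewrite UV big_ord_recr big_ord1 /=.
have nuext : forall A, Sigma M Ebar A -> mu' A = mu A by [].
case: (pselect (exists x : X, True)) => [[x0 _]|hX].
  exact: (not_PC x0 nu0 nuadd nuext PC).
by apply: (part3_empty _ PC) => x; apply: hX; exists x.
Qed.

End Main.
Unset Implicit Arguments.

Theorem theorem1 (X O : finType) (M : {set {set X}}) (R : realType)
  (e : {set X} -> {ffun X -> option O} -> R)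
  (Y : Type) (Ebar : {ffun X -> option O} -> set Y) (mu : set Y -> R) :
  empirical_scenario O M ->
  empirical_model M e ->
  WPS_representation M e Ebar mu ->
  [/\ (strongly_contextual M e ->
         exists n (V : 'I_n -> set Y),
           [/\ fin_family V, (forall i, Sigma M Ebar (V i)),
               Sigma M Ebar (family_union V) & defect mu V = 1]),
      (logically_contextual M e ->
         exists n (V : 'I_n -> set Y),
           [/\ fin_family V, (forall i, Sigma M Ebar (V i)),
               Sigma M Ebar (family_union V) & 0 < defect mu V])
    & (probabilistically_contextual M e ->
         forall (Sig' : set (set Y)) (mu' : set Y -> R),
           monotonic_extension (Sigma M Ebar) mu Sig' mu' ->
           exists n (V : 'I_n -> set Y),
             [/\ fin_family V, (forall i, Sig' (V i)),
                 (forall i j, i != j -> V i `&` V j = set0),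
                 Sig' (family_union V)
               & mu' (family_union V) != \sum_(i < n) mu' (V i)])].
Proof.
move=> HS HE HW; split.
- exact: part1 HS HE HW.
- exact: part2 HS HE HW.
- exact: part3 HS HE HW.
Qed.
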